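(* Let $\Theta$ be a set and $(f_\theta)_{\theta\in\Theta}$ a family of stable mappings $(0,\infty)\to(0,\infty)$ such that $\sup_\theta f_\theta$ and $\inf_\theta f_\theta$ take values in $(0,\infty)$. Then $\sup_{\theta\in\Theta}f_\theta$ and $\inf_{\theta\in\Theta}f_\theta$ are both stable.
   Context: A function $f:(0,\infty)\to(0,\infty)$ is stable if $|f(x)-f(y)|\le\sqrt{\frac{f(x)f(y)}{xy}}|x-y|$ for all $x,y>0$. *)

(* Defs.v *)
From Stdlib Require Import Reals Lra.
Open Scope R_scope.

(* A map f : (0,oo) -> (0,oo), represented as a total function R -> R whose
   values on (0,oo) are positive (values at x <= 0 are irrelevant), is stable if
   |f x - f y| <= sqrt (f x f y / (x y)) |x - y| for all x, y > 0. *)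
Definition stable (f : R -> R) : Prop :=
  (forall x, 0 < x -> 0 < f x) /\
  (forall x y, 0 < x -> 0 < y ->
     Rabs (f x - f y) <= sqrt (f x * f y / (x * y)) * Rabs (x - y)).

Definition is_lower_bound (E : R -> Prop) (m : R) : Prop :=
  forall x, E x -> m <= x.
Definition is_glb (E : R -> Prop) (m : R) : Prop :=
  is_lower_bound E m /\ (forall b, is_lower_bound E b -> b <= m).

(* Main.v *)
Require Import Defs.
From Stdlib Require Import Reals Lra Psatz.
Open Scope R_scope.

Lemma keyL (a b x y : R) : 0 < a -> 0 < b -> 0 < x -> 0 < y ->
  (Rabs (a - b) <= sqrt (a * b / (x * y)) * Rabs (x - y) <->
   (a*x - b*y) * (a*y - b*x) <= 0).
Proof.
  intros Ha Hb Hx Hy.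
  set (q := a * b / (x * y)).
  assert (Hq : q * (x*y) = a*b) by (unfold q; field; lra).
  assert (Hq0 : 0 <= q) by (unfold q; apply Rlt_le, Rdiv_lt_0_compat; nra).
  set (s := sqrt q).
  assert (Hs : s * s = q) by (apply sqrt_sqrt; auto).
  assert (Hs0 : 0 <= s) by apply sqrt_pos.
  assert (E1 : Rabs (a-b) * Rabs (a-b) = (a-b)*(a-b)).
  { rewrite <- Rabs_mult. apply Rabs_pos_eq. apply Rle_0_sqr. }
  assert (E2 : Rabs (x-y) * Rabs (x-y) = (x-y)*(x-y)).
  { rewrite <- Rabs_mult. apply Rabs_pos_eq. apply Rle_0_sqr. }
  assert (P1 := Rabs_pos (a-b)). assert (P2 := Rabs_pos (x-y)).
  assert (Eq : (a*x - b*y) * (a*y - b*x) = x*y*((a-b)*(a-b)) - a*b*((x-y)*(x-y))) by ring.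
  rewrite Eq. split.
  - intro H.
    assert (H2 : Rabs (a-b) * Rabs (a-b) <= (s * Rabs (x-y)) * (s * Rabs (x-y))).
    { apply Rmult_le_compat; auto. }
    assert (H3 : (a-b)*(a-b) <= q * ((x-y)*(x-y))).
    { rewrite <- E1, <- E2, <- Hs. nra. }
    rewrite <- Hq. assert (0 < x*y) by nra.
    assert (H5 := Rmult_le_compat_r (x*y) _ _ (Rlt_le _ _ H0) H3). nra.
  - intro H.
    assert (H3 : (a-b)*(a-b) * (x*y) <= q * ((x-y)*(x-y)) * (x*y)).
    { replace (q * ((x-y)*(x-y)) * (x*y)) with (a*b*((x-y)*(x-y))) by (rewrite <- Hq; ring). lra. }
    assert (H4 : (a-b)*(a-b) <= q * ((x-y)*(x-y))).
    { apply Rmult_le_reg_r with (x*y). nra. exact H3. }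
    rewrite <- E1, <- E2, <- Hs in H4.
    destruct (Rle_dec (Rabs (a-b)) (s * Rabs (x-y))) as [h|h]; auto.
    exfalso. assert (0 <= s * Rabs (x-y)) by nra. nra.
Qed.

Definition mono (f : R -> R) := forall x y, 0 < x -> x <= y ->
  f y * x <= f x * y /\ f x * x <= f y * y.

Lemma stable_mono f : stable f -> mono f.
Proof.
  intros [Hp Hs] x y Hx Hxy.
  assert (Hy : 0 < y) by lra.
  pose proof (Hp x Hx). pose proof (Hp y Hy).
  pose proof (proj1 (keyL (f x) (f y) x y ltac:(auto) ltac:(auto) Hx Hy) (Hs x y Hx Hy)) as K.
  split.
  - destruct (Rle_dec (f y * x) (f x * y)) as [h|h]; auto. exfalso.
    apply Rnot_le_lt in h.
    destruct (Rle_dec 0 (f x * x - f y * y)) as [h2|h2].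
    + assert (f x * y - f x * x = f x * (y - x)) by ring.
      assert (f y * y - f y * x = f y * (y - x)) by ring.
      assert (0 <= f x * (y - x)) by (apply Rmult_le_pos; lra).
      assert (0 <= f y * (y - x)) by (apply Rmult_le_pos; lra).
      lra.
    + apply Rnot_le_lt in h2.
      assert (0 < (f y * y - f x * x) * (f y * x - f x * y)) by (apply Rmult_lt_0_compat; lra).
      lra.
  - destruct (Rle_dec (f x * x) (f y * y)) as [h|h]; auto. exfalso.
    apply Rnot_le_lt in h.
    assert (f x * y - f x * x = f x * (y - x)) by ring.
    assert (f y * y - f y * x = f y * (y - x)) by ring.
    assert (0 <= f x * (y - x)) by (apply Rmult_le_pos; lra).
    assert (0 <= f y * (y - x)) by (apply Rmult_le_pos; lra).
    assert (0 < (f x * x - f y * y) * (f x * y - f y * x)) by (apply Rmult_lt_0_compat; lra).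
    lra.
Qed.

Lemma mono_stable f : (forall x, 0 < x -> 0 < f x) -> mono f -> stable f.
Proof.
  intros Hp Hm. split; auto. intros x y Hx Hy.
  apply keyL; auto.
  destruct (Rle_dec x y) as [h|h].
  - destruct (Hm x y Hx h).
    assert (0 <= (f y * y - f x * x) * (f x * y - f y * x)) by (apply Rmult_le_pos; lra). lra.
  - destruct (Hm y x Hy ltac:(lra)).
    assert (0 <= (f x * x - f y * y) * (f y * x - f x * y)) by (apply Rmult_le_pos; lra). lra.
Qed.

Theorem corollary1 (Theta : Type) (f : Theta -> R -> R) (S I : R -> R) :
  (forall t : Theta, stable (f t)) ->
  (forall x, 0 < x -> is_lub (fun y => exists t : Theta, y = f t x) (S x) /\ 0 < S x) ->
  (forall x, 0 < x -> is_glb (fun y => exists t : Theta, y = f t x) (I x) /\ 0 < I x) ->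
  stable S /\ stable I.
Proof.
  intros Hf HS HI. split.
  - apply mono_stable. intros x Hx; apply (HS x Hx).
    intros x y Hx Hxy. assert (Hy : 0 < y) by lra.
    destruct (HS x Hx) as [[Ux Lx] Sx]. destruct (HS y Hy) as [[Uy Ly] Sy].
    split.
    + assert (S y <= S x * y / x).
      { apply Ly. intros z [t ->]. destruct (stable_mono _ (Hf t) x y Hx Hxy) as [A B].
        assert (f t x <= S x) by (apply Ux; eauto).
        apply Rmult_le_reg_r with x; auto. field_simplify; nra. }
      assert (S y * x <= S x * y / x * x) by nra.
      replace (S x * y / x * x) with (S x * y) in * by (field; lra). lra.
    + assert (S x <= S y * y / x).
      { apply Lx. intros z [t ->]. destruct (stable_mono _ (Hf t) x y Hx Hxy) as [A B].
        assert (f t y <= S y) by (apply Uy; eauto).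
        apply Rmult_le_reg_r with x; auto. field_simplify; nra. }
      assert (S x * x <= S y * y / x * x) by nra.
      replace (S y * y / x * x) with (S y * y) in * by (field; lra). lra.
  - apply mono_stable. intros x Hx; apply (HI x Hx).
    intros x y Hx Hxy. assert (Hy : 0 < y) by lra.
    destruct (HI x Hx) as [[Ux Lx] Sx]. destruct (HI y Hy) as [[Uy Ly] Sy].
    split.
    + assert (I y * x / y <= I x).
      { apply Lx. intros z [t ->]. destruct (stable_mono _ (Hf t) x y Hx Hxy) as [A B].
        assert (I y <= f t y) by (apply Uy; eauto).
        apply Rmult_le_reg_r with y; auto. field_simplify; nra. }
      assert (I y * x / y * y <= I x * y) by nra.
      replace (I y * x / y * y) with (I y * x) in * by (field; lra). lra.
    + assert (I x * x / y <= I y).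
      { apply Ly. intros z [t ->]. destruct (stable_mono _ (Hf t) x y Hx Hxy) as [A B].
        assert (I x <= f t x) by (apply Ux; eauto).
        apply Rmult_le_reg_r with y; auto. field_simplify; nra. }
      assert (I x * x / y * y <= I y * y) by nra.
      replace (I x * x / y * y) with (I x * x) in * by (field; lra). lra.
Qed.
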